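(* Let $((\mathcal{S},\mathcal{T}),(\mathcal{U},\mathcal{V}))$ be a twin cotorsion pair on a triangulated category $\mathcal{C}$, and put $\mathcal{W}=\mathcal{U}\cap\mathcal{T}$, $\mathcal{C}^+=\mathcal{W}*\mathcal{V}[1]$, $\mathcal{C}^-=\mathcal{S}[-1]*\mathcal{W}$. Then $\mathcal{U}\subseteq\mathcal{C}^-$ and $\mathcal{T}\subseteq\mathcal{C}^+$.
   Context: For full subcategories $\mathcal{X},\mathcal{Y}$, $\mathcal{X}*\mathcal{Y}$ is the full subcategory of objects $C$ admitting a distinguished triangle $X\to C\to Y\to X[1]$ with $X\in\mathcal{X}$, $Y\in\mathcal{Y}$. A cotorsion pair $(\mathcal{A},\mathcal{B})$: full subcategories closed under isomorphisms, finite direct sums and summands with $\mathcal{C}=\mathcal{A}*\mathcal{B}[1]$ and $\mathcal{C}(\mathcal{A},\mathcal{B}[1])=0$. A twin cotorsion pair $((\mathcal{S},\mathcal{T}),(\mathcal{U},\mathcal{V}))$ consists of two cotorsion pairs with $\mathcal{C}(\mathcal{S},\mathcal{V}[1])=0$. *)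

(* Defs.v *)
From HB Require Import structures.
From mathcomp Require Import all_boot all_algebra.
Set Implicit Arguments. Unset Strict Implicit. Unset Printing Implicit Defensive.
Import GRing.Theory.
Local Open Scope ring_scope.

Record TriangCat := {
  obj : Type;
  hom : obj -> obj -> zmodType;
  idm : forall X : obj, hom X X;
  comp : forall X Y Z : obj, hom Y Z -> hom X Y -> hom X Z; (* comp g f = g o f *)
  sh : obj -> obj;
  shm : forall X Y : obj, hom X Y -> hom (sh X) (sh Y);
  dist : forall X Y Z : obj, hom X Y -> hom Y Z -> hom Z (sh X) -> Prop;

  comp_assoc : forall X Y Z W (h : hom Z W) (g : hom Y Z) (f : hom X Y),
      comp h (comp g f) = comp (comp h g) f;
  comp_id_l : forall X Y (f : hom X Y), comp (idm Y) f = f;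
  comp_id_r : forall X Y (f : hom X Y), comp f (idm X) = f;
  comp_addl : forall X Y Z (g1 g2 : hom Y Z) (f : hom X Y),
      comp (g1 + g2) f = comp g1 f + comp g2 f;
  comp_addr : forall X Y Z (g : hom Y Z) (f1 f2 : hom X Y),
      comp g (f1 + f2) = comp g f1 + comp g f2;
  zero_obj_ex : exists Z : obj,
      (forall X (f g : hom Z X), f = g) /\ (forall X (f g : hom X Z), f = g);
  biprod_ex : forall X1 X2 : obj, exists P (i1 : hom X1 P) (i2 : hom X2 P)
      (p1 : hom P X1) (p2 : hom P X2),
      [/\ comp p1 i1 = idm X1, comp p2 i2 = idm X2, comp p2 i1 = 0,
          comp p1 i2 = 0 & comp i1 p1 + comp i2 p2 = idm P];
  shm_id : forall X, shm (idm X) = idm (sh X);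
  shm_comp : forall X Y Z (g : hom Y Z) (f : hom X Y),
      shm (comp g f) = comp (shm g) (shm f);
  shm_add : forall X Y (f g : hom X Y), shm (f + g) = shm f + shm g;
  (* ... which is an autoequivalence: fully faithful, essentially surjective *)
  shm_inj : forall X Y (f g : hom X Y), shm f = shm g -> f = g;
  shm_surj : forall X Y (g : hom (sh X) (sh Y)), exists f : hom X Y, shm f = g;
  sh_esurj : forall Y, exists X (u : hom (sh X) Y) (v : hom Y (sh X)),
      comp v u = idm (sh X) /\ comp u v = idm Y;

  dist_iso : forall X Y Z X' Y' Z' (f : hom X Y) (g : hom Y Z) (h : hom Z (sh X))
      (f' : hom X' Y') (g' : hom Y' Z') (h' : hom Z' (sh X'))
      (a : hom X X') (b : hom Y Y') (c : hom Z Z')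
      (a' : hom X' X) (b' : hom Y' Y) (c' : hom Z' Z),
      comp a' a = idm X -> comp a a' = idm X' ->
      comp b' b = idm Y -> comp b b' = idm Y' ->
      comp c' c = idm Z -> comp c c' = idm Z' ->
      comp b f = comp f' a -> comp c g = comp g' b -> comp (shm a) h = comp h' c ->
      dist f g h -> dist f' g' h';
  dist_id : forall X Z : obj,
      (forall W (f g : hom Z W), f = g) -> (forall W (f g : hom W Z), f = g) ->
      dist (idm X) (0 : hom X Z) (0 : hom Z (sh X));
  dist_ex : forall X Y (f : hom X Y), exists Z (g : hom Y Z) (h : hom Z (sh X)),
      dist f g h;
  dist_rot : forall X Y Z (f : hom X Y) (g : hom Y Z) (h : hom Z (sh X)),
      dist f g h <-> dist g h (- shm f);
  dist_mor : forall X Y Z X' Y' Z' (f : hom X Y) (g : hom Y Z) (h : hom Z (sh X))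
      (f' : hom X' Y') (g' : hom Y' Z') (h' : hom Z' (sh X'))
      (a : hom X X') (b : hom Y Y'),
      dist f g h -> dist f' g' h' -> comp b f = comp f' a ->
      exists c : hom Z Z', comp c g = comp g' b /\ comp (shm a) h = comp h' c;
  dist_oct : forall X Y Z Z' X' Y' (f : hom X Y) (g : hom Y Z)
      (u : hom Y Z') (u' : hom Z' (sh X))
      (v : hom Z X') (v' : hom X' (sh Y))
      (w : hom Z Y') (w' : hom Y' (sh X)),
      dist f u u' -> dist g v v' -> dist (comp g f) w w' ->
      exists (a : hom Z' Y') (b : hom Y' X'),
        [/\ dist a b (comp (shm u) v'),
            comp a u = comp w g, comp w' a = u',
            comp b w = v & comp v' b = comp (shm f) w']
}.

Arguments idm {t} X.
Arguments comp {t X Y Z}.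
Arguments sh {t}.
Arguments shm {t X Y}.
Arguments dist {t X Y Z}.
Arguments hom t : clear implicits.
Arguments obj t : clear implicits.

Section Subcats.
Variable C : TriangCat.

(* full subcategories are given by predicates on objects *)
Definition subcat := obj C -> Prop.

Definition isoObj (X Y : obj C) : Prop :=
  exists (f : hom C X Y) (g : hom C Y X), comp g f = idm X /\ comp f g = idm Y.

Definition is_zero_obj (Z : obj C) : Prop :=
  (forall W (f g : hom C Z W), f = g) /\ (forall W (f g : hom C W Z), f = g).

Definition is_biprod (X1 X2 P : obj C) : Prop :=
  exists (i1 : hom C X1 P) (i2 : hom C X2 P) (p1 : hom C P X1) (p2 : hom C P X2),
    [/\ comp p1 i1 = idm X1, comp p2 i2 = idm X2, comp p2 i1 = 0,
        comp p1 i2 = 0 & comp i1 p1 + comp i2 p2 = idm P].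

(* X * Y : objects E with a distinguished triangle A -> E -> B -> A[1], A in X, B in Y *)
Definition ext (X Y : subcat) : subcat := fun E =>
  exists (A B : obj C) (f : hom C A E) (g : hom C E B) (h : hom C B (sh A)),
    [/\ dist f g h, X A & Y B].

(* X[1] and X[-1] (closed under isomorphism) *)
Definition shift1 (X : subcat) : subcat := fun Y =>
  exists A, X A /\ isoObj (sh A) Y.
Definition shiftm1 (X : subcat) : subcat := fun Y =>
  exists A, X A /\ isoObj (sh Y) A.

Definition capS (X Y : subcat) : subcat := fun E => X E /\ Y E.
Definition subS (X Y : subcat) : Prop := forall E, X E -> Y E.

Definition hom_vanish (X Y : subcat) : Prop :=
  forall A B (f : hom C A B), X A -> Y B -> f = 0.

Definition good_subcat (X : subcat) : Prop :=
  [/\ (forall A B, isoObj A B -> X A -> X B),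
      (forall Z, is_zero_obj Z -> X Z),
      (forall A B P, is_biprod A B P -> X A -> X B -> X P) &
      (forall A B P, is_biprod A B P -> X P -> X A /\ X B)].

Definition cotorsion_pair (A B : subcat) : Prop :=
  [/\ good_subcat A, good_subcat B,
      (forall E, ext A (shift1 B) E) &
      hom_vanish A (shift1 B)].

Definition twin_cotorsion_pair (S T U V : subcat) : Prop :=
  [/\ cotorsion_pair S T, cotorsion_pair U V & hom_vanish S (shift1 V)].

End Subcats.

(* Main.v *)
From mathcomp Require Import all_boot all_algebra.
Require Import Defs.
Set Implicit Arguments. Unset Strict Implicit. Unset Printing Implicit Defensive.
Import GRing.Theory.
Local Open Scope ring_scope.

Section L.
Variable C : TriangCat.

Lemma comp0l X Y Z (f : hom C X Y) : comp (0 : hom C Y Z) f = 0.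
Proof.
have H := comp_addl (0 : hom C Y Z) 0 f; rewrite addr0 in H.
by apply: (@addrI _ (comp 0 f)); rewrite addr0 -H.
Qed.
Lemma comp0r X Y Z (g : hom C Y Z) : comp g (0 : hom C X Y) = 0.
Proof.
have H := comp_addr g (0 : hom C X Y) 0; rewrite addr0 in H.
by apply: (@addrI _ (comp g 0)); rewrite addr0 -H.
Qed.
Lemma compNl X Y Z (g : hom C Y Z) (f : hom C X Y) : comp (- g) f = - comp g f.
Proof. by apply: (@addrI _ (comp g f)); rewrite -comp_addl !subrr comp0l. Qed.
Lemma compNr X Y Z (g : hom C Y Z) (f : hom C X Y) : comp g (- f) = - comp g f.
Proof. by apply: (@addrI _ (comp g f)); rewrite -comp_addr !subrr comp0r. Qed.
Lemma shm0 X Y : shm (0 : hom C X Y) = 0.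
Proof.
have H := shm_add (0 : hom C X Y) 0; rewrite addr0 in H.
by apply: (@addrI _ (shm (0 : hom C X Y))); rewrite addr0 -H.
Qed.
Lemma shmN X Y (f : hom C X Y) : shm (- f) = - shm f.
Proof. by apply: (@addrI _ (shm f)); rewrite -shm_add !subrr shm0. Qed.

Lemma rot3 X Y Z (f : hom C X Y) g (h : hom C Z (sh X)) :
  dist f g h -> dist (- shm f) (- shm g) (- shm h).
Proof. by move=> /dist_rot /dist_rot /dist_rot. Qed.

Lemma zeroD W : exists Z0 (z : hom C W Z0) (z' : hom C Z0 (sh W)),
  dist z z' (- idm (sh W)).
Proof.
have [Z0 [h1 h2]] := zero_obj_ex C.
exists Z0, 0, 0; rewrite -(shm_id W); apply: (proj1 (dist_rot _ _ _)); exact: dist_id.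
Qed.

Lemma L1 X Y Z (f : hom C X Y) g (h : hom C Z (sh X)) : dist f g h -> comp g f = 0.
Proof.
move=> D; have [Z0 [h1 h2]] := zero_obj_ex C.
have D0 := dist_id X h1 h2.
have [c [Hc _]] := dist_mor (a := idm X) (b := f) D0 D erefl.
by rewrite -Hc comp0r.
Qed.

Lemma L4 X Y Z (f : hom C X Y) g (h : hom C Z (sh X)) W (s : hom C W Y) :
  dist f g h -> comp g s = 0 -> exists c, s = comp f c.
Proof.
move=> D Hs; have [Z0 [z [z' Dz]]] := zeroD W.
have D' := proj1 (dist_rot f g h) D.
have E : comp (0 : hom C Z0 Z) z = comp g s by rewrite comp0l Hs.
have [c [_ Hc]] := dist_mor Dz D' E.
have [c0 Hc0] := shm_surj c.
exists c0; apply: shm_inj; rewrite shm_comp Hc0.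
move: Hc; rewrite compNr comp_id_r compNl => /eqP; rewrite eqr_opp => /eqP.
by [].
Qed.

Lemma L3 X Y Z (f : hom C X Y) g (h : hom C Z (sh X)) W (s : hom C W Z) :
  dist f g h -> comp h s = 0 -> exists c, s = comp g c.
Proof. by move=> D; apply: L4 (proj1 (dist_rot _ _ _) D). Qed.

Lemma L2 X Y Z (f : hom C X Y) g (h : hom C Z (sh X)) W (u : hom C Y W) :
  dist f g h -> comp u f = 0 -> exists c, u = comp c g.
Proof.
move=> D Hu; have [Z0 [z [z' Dz]]] := zeroD W.
have Dt := proj1 (dist_rot _ _ _) Dz.
have E : comp (shm u) (- shm f) = comp z' (0 : hom C (sh X) Z0).
  by rewrite compNr -shm_comp Hu shm0 oppr0 comp0r.
have [c [Hc _]] := dist_mor (rot3 D) Dt E.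
have [c0 Hc0] := shm_surj c.
exists c0; apply: shm_inj; rewrite shm_comp Hc0.
move: Hc; rewrite compNr compNl comp_id_l => /eqP; rewrite eqr_opp => /eqP.
by [].
Qed.

Lemma retract (A : subcat C) X Y (i : hom C X Y) (r : hom C Y X) :
  good_subcat A -> A Y -> comp r i = idm X -> A X.
Proof.
case=> _ _ _ hsum AY Hri.
have [K [p [q D]]] := dist_ex i.
have Hpi := L1 D.
have D' := proj1 (dist_rot _ _ _) D.
have Hq0 : q = 0.
  have H := L1 (proj1 (dist_rot _ _ _) D').
  rewrite -(comp_id_l q) -shm_id -Hri shm_comp -comp_assoc.
  by rewrite -[comp (shm i) q]opprK -compNl H oppr0 comp0r.
have Hq : comp q (idm K) = 0 by rewrite Hq0 comp0l.
have [s Hs] := L4 D' Hq.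
have Hu : comp (idm Y - comp i r) i = 0.
  by rewrite comp_addl compNl comp_id_l -comp_assoc Hri comp_id_r subrr.
have [t Ht] := L2 D Hu.
have Hpt : comp p t = idm K.
  have H : comp (comp p t) p = p.
    by rewrite -comp_assoc -Ht comp_addr compNr comp_id_r comp_assoc Hpi comp0l subr0.
  by rewrite -(comp_id_r (comp p t)) Hs comp_assoc H.
have Hrt : comp r t = 0.
  have H : comp (comp r t) p = 0.
    by rewrite -comp_assoc -Ht comp_addr compNr comp_id_r comp_assoc Hri comp_id_l subrr.
  by rewrite -(comp_id_r (comp r t)) Hs comp_assoc H comp0l.
apply: (proj1 (hsum X K Y _ AY)).
exists i, t, r, p; split => //.
by rewrite -Ht addrC subrK.
Qed.

Lemma charB (A B : subcat C) X : cotorsion_pair A B ->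
  (forall A0 (s : hom C A0 (sh X)), A A0 -> s = 0) -> B X.
Proof.
case=> _ gB hext _ H.
have [S1 [B' [a [b [c [D HS1 [T1 [HT1 [psi [psi' [e1 e2]]]]]]]]]]] := hext (sh X).
have Ha : comp (idm (sh X)) a = 0 by rewrite (H _ a HS1) comp0r.
have [r Hr] := L2 D Ha.
have [i Hi] := shm_surj (comp psi' b).
have [r0 Hr0] := shm_surj (comp r psi).
apply: (retract (i := i) (r := r0) gB HT1).
apply: shm_inj; rewrite shm_comp Hi Hr0 shm_id.
by rewrite -comp_assoc (comp_assoc psi) e2 comp_id_l -Hr.
Qed.

Lemma charA (A B : subcat C) X : cotorsion_pair A B ->
  (forall B0 (t : hom C X B0), shift1 B B0 -> t = 0) -> A X.
Proof.
case=> gA _ hext _ H.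
have [U1 [B0 [f [g [h [D HU1 HB0]]]]]] := hext X.
have Hg : comp g (idm X) = 0 by rewrite (H _ g HB0) comp0l.
have [c Hc] := L4 D Hg.
by apply: (retract (i := c) (r := f) gA HU1).
Qed.
End L.

Theorem lemma2p5 (C : TriangCat) (S T U V : obj C -> Prop) :
  twin_cotorsion_pair S T U V ->
  let W := capS U T in
  subS U (ext (shiftm1 S) W) /\ subS T (ext W (shift1 V)).
Proof.
move=> [HST HUV vSV] W.
have HST' := HST; have HUV' := HUV.
case: HST' => [gS gT extST vST]; case: HUV' => [gU gV extUV vUV].
split.
- move=> U0 HU0.
  have [S1 [B' [a [b [c [D HS1 HB']]]]]] := extST (sh U0).
  have [A [phi [phi' [e1 e2]]]] := sh_esurj S1.
  have [f Hf] := shm_surj (comp a phi).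
  have [Z [g [h Dfgh]]] := dist_ex f.
  exists A, Z, f, g, h; split => //.
    by exists S1; split => //; exists phi, phi'.
  split.
  + apply: (charA HUV) => B0 t HB0.
    have Htg : comp t g = 0 by apply: (vUV _ _ _ HU0 HB0).
    have [t' Ht'] := L2 (proj1 (dist_rot _ _ _) Dfgh) Htg.
    have Ht0 : comp t' phi' = 0 by apply: (vSV _ _ _ HS1 HB0).
    rewrite Ht'.
    have -> : t' = 0.
      by rewrite -(comp_id_r t') -e1 comp_assoc Ht0 comp0l.
    by rewrite comp0l.
  + apply: (charB HST) => S0 s HS0.
    have P := rot3 Dfgh.
    have E : comp (- idm (sh U0)) (- shm f) = comp a phi.
      by rewrite compNl compNr comp_id_l opprK Hf.
    have [gam [_ Hg]] := dist_mor P D E.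
    have Hgs : comp gam s = 0 by apply: (vST _ _ _ HS0 HB').
    have H0 : comp (shm phi) (comp (- shm h) s) = 0.
      by rewrite comp_assoc Hg -comp_assoc Hgs comp0r.
    have H1 : comp (- shm h) s = 0.
      rewrite -(comp_id_l (comp (- shm h) s)) -shm_id -e1 shm_comp.
      by rewrite -comp_assoc H0 comp0r.
    have [d Hd] := L3 P H1.
    have Hbd : comp b d = 0 by apply: (vST _ _ _ HS0 HB').
    have [e He] := L4 D Hbd.
    have Ha : a = comp (shm f) phi'.
      by rewrite Hf -comp_assoc e2 comp_id_r.
    rewrite Hd He Ha compNl !comp_assoc -shm_comp (L1 Dfgh) shm0.
    by rewrite !comp0l oppr0.
- move=> T0 HT0.
  have [U1 [B [f [g [h [D HU1 HB]]]]]] := extUV T0.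
  exists U1, B, f, g, h; split => //; split => //.
  apply: (charB HST) => S0 s HS0.
  have D2 := proj1 (dist_rot _ _ _) (proj1 (dist_rot _ _ _) D).
  have HT : shift1 T (sh T0).
    by exists T0; split => //; exists (idm _), (idm _); split; apply: comp_id_l.
  have Hs : comp (- shm f) s = 0 by apply: (vST _ _ _ HS0 HT).
  have [c Hc] := L4 D2 Hs.
  rewrite Hc.
  have -> : c = 0 by apply: (vSV _ _ _ HS0 HB).
  by rewrite comp0r.
Qed.
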